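(* Consider a game in which Constructor and Blocker alternately claim unclaimed edges of $K_n$ (with Constructor possibly subject to restrictions on which edges she may claim). Assume that Blocker always answers each move of Constructor by claiming an unclaimed edge with both endpoints in the connected component of Constructor's graph containing the edge Constructor just claimed, whenever such an unclaimed edge exists. If at the end of the game some connected component $C$ of Constructor's graph has $r$ vertices, then at least $$\frac{\binom{r}{2}-\lfloor r/2\rfloor}{2}$$ of the edges of $K_n$ between vertices of $C$ are not claimed by Constructor.
   Context: Constructor's graph is the graph on $V(K_n)$ whose edges are those claimed by Constructor. *)

(* Defs.v *)
From mathcomp Require Import all_boot.
Set Implicit Arguments. Unset Strict Implicit. Unset Printing Implicit Defensive.

(* Vertices of K_n are 'I_n; an edge of K_n is a 2-element subset of 'I_n.
   A graph on V(K_n) is a set G of such edges. *)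

Definition gadj (n : nat) (G : {set {set 'I_n}}) : rel 'I_n :=
  fun x y => (x != y) && ([set x; y] \in G).

Definition vcomp (n : nat) (G : {set {set 'I_n}}) (x : 'I_n) : {set 'I_n} :=
  [set y | connect (gadj G) x y].

Definition compE (n : nat) (G : {set {set 'I_n}}) (e : {set 'I_n}) : {set 'I_n} :=
  [set y | [exists x in e, connect (gadj G) x y]].

(* A play is a sequence s of edges, claimed in order; the players alternate,
   and cstart says whether Constructor makes the first move.
   Move number i (0-based) is Constructor's iff isC cstart i. *)
Definition isC (cstart : bool) (i : nat) : bool := cstart == ~~ odd i.

Definition claimed (n : nat) (s : seq {set 'I_n}) (k : nat) : {set {set 'I_n}} :=
  [set e in take k s].

Definition cgraph (n : nat) (cstart : bool) (s : seq {set 'I_n}) (k : nat)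
  : {set {set 'I_n}} :=
  [set nth set0 s (val i) | i : 'I_(size s) & (val i < k) && isC cstart i].

(* legal play of the edge-claiming game on K_n: every move claims an edge of
   K_n that was unclaimed *)
Definition valid_play (n : nat) (s : seq {set 'I_n}) : Prop :=
  uniq s /\ (forall e, e \in s -> #|e| = 2).

Definition blocker_rule (n : nat) (cstart : bool) (s : seq {set 'I_n}) : Prop :=
  forall i : nat, i.+1 < size s -> isC cstart i ->
    let K := compE (cgraph cstart s i.+1) (nth set0 s i) in
    (exists f : {set 'I_n},
        [&& #|f| == 2, f \subset K & f \notin claimed s i.+1]) ->
    nth set0 s i.+1 \subset K.

(* Main.v *)
Require Import Defs.
From mathcomp Require Import all_boot zify.
Set Implicit Arguments. Unset Strict Implicit. Unset Printing Implicit Defensive.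

Section Gr.
Variable n : nat.
Implicit Types (G X D : {set {set 'I_n}}) (K L e : {set 'I_n}) (x y : 'I_n).

Definition ins K X := [set f in X | f \subset K].
Definition clo G K := forall x y, gadj G x y -> (x \in K) = (y \in K).

Lemma gadj_sym G : symmetric (gadj G).
Proof.
move=> x y; rewrite /gadj eq_sym; congr (_ && _).
by rewrite setUC.
Qed.

Lemma clo_connect G K x y : clo G K -> connect (gadj G) x y -> (x \in K) = (y \in K).
Proof.
move=> H; exact: (@closed_connect _ (gadj G) (fun z => z \in K)).
Qed.

Lemma compE_clo G e : clo G (compE G e).
Proof.
move=> x y hxy; rewrite !inE; apply/idP/idP => /existsP [z /andP [hz hc]];
  apply/existsP; exists z; rewrite hz /=.
  exact: connect_trans hc (connect1 hxy).
have hyx : gadj G y x by rewrite gadj_sym.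
exact: connect_trans hc (connect1 hyx).
Qed.

Lemma vcomp_clo G x : clo G (vcomp G x).
Proof.
move=> y z hyz; rewrite !inE; apply/idP/idP => hc.
  exact: connect_trans hc (connect1 hyz).
have hzy : gadj G z y by rewrite gadj_sym.
exact: connect_trans hc (connect1 hzy).
Qed.

Lemma sub_compE G e : e \subset compE G e.
Proof. by apply/subsetP => x hx; rewrite inE; apply/existsP; exists x; rewrite hx connect0. Qed.

Lemma compE_sub G K e : clo G K -> e \subset K -> compE G e \subset K.
Proof.
move=> hK he; apply/subsetP => y; rewrite inE => /existsP [x /andP [hx hc]].
by rewrite -(clo_connect hK hc) (subsetP he).
Qed.

Lemma clo_mono G G' K : G \subset G' -> clo G' K -> clo G K.
Proof.
move=> hs hK x y; rewrite /gadj => /andP [h1 h2]; apply: hK.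
by rewrite /gadj h1 (subsetP hs).
Qed.

Lemma clo_diff G K L : clo G K -> clo G L -> clo G (K :\: L).
Proof. by move=> hK hL x y h; rewrite !inE (hK _ _ h) (hL _ _ h). Qed.

Lemma ins_split_le G K L : clo G L -> (forall f, f \in G -> #|f| = 2) ->
  #|ins K G| <= #|ins L G| + #|ins (K :\: L) G|.
Proof.
move=> hL h2.
have hs : ins K G \subset ins L G :|: ins (K :\: L) G.
  apply/subsetP => f; rewrite !inE => /andP [hf hfK]; rewrite hf /=.
  have := h2 f hf => /eqP /cards2P [p [q [hpq ef]]].
  have hadj : gadj G p q by rewrite /gadj hpq -ef hf.
  have := hL _ _ hadj.
  move: hfK; rewrite ef !subUset !sub1set !inE => /andP [hp hq].
  by rewrite hp hq; case: (p \in L); case: (q \in L).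
by apply: (leq_trans (subset_leq_card hs)); rewrite cardsU leq_subr.
Qed.

Lemma ins_split_ge X K L : L \subset K -> (forall f, f \in X -> #|f| = 2) ->
  #|ins L X| + #|ins (K :\: L) X| <= #|ins K X|.
Proof.
move=> hLK h2.
have -> : #|ins L X| + #|ins (K :\: L) X| = #|ins L X :|: ins (K :\: L) X|.
  rewrite cardsU.
  have -> : ins L X :&: ins (K :\: L) X = set0.
    apply/setP => f; rewrite !inE.
    apply/negP => /andP [/andP [hf hfL] /andP [_ hfKL]].
    have := h2 f hf; case: (set_0Vmem f) => [-> | [z hz]]; first by rewrite cards0.
    move=> _; have := subsetP hfL z hz; have := subsetP hfKL z hz.
    by rewrite !inE => /andP [/negP].
  by rewrite cards0 subn0.
apply: subset_leq_card; apply/subsetP => f; rewrite !inE.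
case/orP => /andP [-> h] /=.
  exact: subset_trans h hLK.
apply: (subset_trans h); apply/subsetP => z; rewrite inE => /andP [_ ->]. by [].
Qed.

Lemma ins_D G D L : G \subset D -> #|ins L D| = #|ins L G| + #|ins L (D :\: G)|.
Proof.
move=> hGD; rewrite -(cardsID G (ins L D)).
congr addn; apply: eq_card => f; rewrite !inE.
  case hf: (f \in G). by rewrite (subsetP hGD _ hf) andbT. by rewrite !andbF.
by rewrite andbA.
Qed.

Lemma odd_bin2 l : odd 'C(l, 2) = odd l./2.
Proof.
suff : odd 'C(l, 2) = odd l./2 /\ odd 'C(l.+1, 2) = odd l.+1./2 by case.
elim: l => [|l [IH1 IH2]] //; split => //.
rewrite binS binS !bin1 !oddD IH1 /=.
by case: (odd l); case: (odd l./2).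
Qed.


Section Game.
Variable cstart : bool.
Variable s : seq {set 'I_n}.

Lemma claimedS k : k < size s -> claimed s k.+1 = nth set0 s k |: claimed s k.
Proof.
move=> hk; rewrite /claimed (take_nth set0 hk); apply/setP => y.
by rewrite !inE mem_rcons in_cons.
Qed.

Lemma cgraphS k : k < size s -> cgraph cstart s k.+1 =
  if isC cstart k then nth set0 s k |: cgraph cstart s k else cgraph cstart s k.
Proof.
move=> hk; apply/setP => y; apply/imsetP/idP.
- move=> [i]; rewrite inE => /andP [hi hci] ->.
  rewrite ltnS leq_eqVlt in hi; case/orP: hi => [/eqP hik | hik].
    by rewrite -hik hci setU11.
  have hin : nth set0 s i \in cgraph cstart s k.
    by apply/imsetP; exists i => //; rewrite inE hik hci.
  by case: ifP => _; rewrite ?in_setU1 hin ?orbT.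
- have H : y \in cgraph cstart s k -> exists2 i : 'I_(size s), i \in [set i : 'I_(size s) | (val i < k.+1) && isC cstart i] & y = nth set0 s i.
    move/imsetP => [i]; rewrite inE => /andP [hi hci] ->.
    by exists i => //; rewrite inE hci andbT (leqW hi).
  case: ifP => hC; last exact: H.
  rewrite in_setU1 => /orP [/eqP -> | ]; last exact: H.
  by exists (Ordinal hk); rewrite // inE /= ltnSn hC.
Qed.

Lemma cgraph0 : cgraph cstart s 0 = set0.
Proof. by apply/setP => y; rewrite inE; apply/imsetP => [[i]]; rewrite inE ltn0. Qed.

Lemma cg_sub_cl k : cgraph cstart s k \subset claimed s k.
Proof.
apply/subsetP => y /imsetP [i]; rewrite inE => /andP [hi _] ->; rewrite inE.
rewrite -(nth_take set0 hi); apply: mem_nth; rewrite size_take.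
by case: ifP => _ //; exact: ltn_ord.
Qed.

Lemma notin_cl k : uniq s -> k < size s -> nth set0 s k \notin claimed s k.
Proof.
move=> hu hk; rewrite inE.
move: hu; rewrite -{1}(cat_take_drop k s) cat_uniq => /and3P [_ hh _].
apply/negP => hin; move/negP: hh; apply; apply/hasP.
exists (nth set0 s k) => //.
have -> : nth set0 s k = nth set0 (drop k s) 0 by rewrite nth_drop addn0.
by apply: mem_nth; rewrite size_drop subn_gt0.
Qed.

Lemma cl_card k e : valid_play s -> e \in claimed s k -> #|e| = 2.
Proof. by move=> [_ h]; rewrite inE => /mem_take /h. Qed.

Lemma isC_pred k : 0 < k -> isC cstart k.-1 = ~~ isC cstart k.
Proof. by case: k => // k _; rewrite /isC /=; case: cstart; case: (odd k). Qed.


Lemma ins_U1_card K e X : e \notin X -> #|ins K (e |: X)| = #|ins K X| + (e \subset K).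
Proof.
move=> heX.
have -> : ins K (e |: X) = if e \subset K then e |: ins K X else ins K X.
  apply/setP => f; case: ifP => h; rewrite !inE;
  by case: (f =P e) => [->|_] /=; rewrite ?h ?andbF.
case: ifP => h; last by rewrite addn0.
by rewrite cardsU1 inE (negbTE heX) /= addnC.
Qed.

Lemma par_arith c b h C : odd C = odd h -> c + b + 1 = C -> c <= b + h -> c + 1 <= b + h.
Proof.
move=> hp hC hle; rewrite addn1 ltn_neqAle hle andbT; apply/eqP => he.
move: hp; rewrite -hC he !oddD; by case: (odd b); case: (odd h).
Qed.

Lemma half_add a b : a./2 + b./2 <= (a + b)./2.
Proof. rewrite -!divn2; lia. Qed.

Definition Ek k K : bool := [&& 0 < k, isC cstart k.-1, nth set0 s k.-1 \subset K &
  [exists f : {set 'I_n}, [&& #|f| == 2,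
     f \subset compE (cgraph cstart s k) (nth set0 s k.-1) & f \notin claimed s k]]].

Definition Inv k := forall K, clo (cgraph cstart s k) K ->
  #|ins K (cgraph cstart s k)| <=
    #|ins K (claimed s k :\: cgraph cstart s k)| + #|K|./2 + Ek k K.

Lemma inv_all : valid_play s -> blocker_rule cstart s -> forall k, k <= size s -> Inv k.
Proof.
move=> hv hb; elim => [_ | k IH hk1].
  move=> K _; rewrite cgraph0.
  have -> : ins K set0 = set0 by apply/setP => f; rewrite !inE.
  by rewrite cards0.
have hk : k < size s := hk1.
have {}IH := IH (ltnW hk).
have heD : nth set0 s k \notin claimed s k := notin_cl hv.1 hk.
have hGD := cg_sub_cl k.
have heG : nth set0 s k \notin cgraph cstart s k.
  by apply: contra heD; apply: (subsetP hGD).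
have h2 : forall f, f \in claimed s k.+1 -> #|f| = 2 := fun f => cl_card hv.
rewrite (claimedS hk) in h2.
have hD2 : forall f, f \in claimed s k -> #|f| = 2 := fun f => cl_card hv.
move=> K; rewrite /Ek /= (cgraphS hk) (claimedS hk).
set e := nth set0 s k; set G := cgraph cstart s k; set D := claimed s k.
have hDG : (e |: D) :\: G = e |: (D :\: G).
  apply/setP => f; rewrite !inE; case: (f =P e) => [->|] //=.
  by rewrite heG.
case hC: (isC cstart k) => /= hK.
- have hEk : forall K, Ek k K = false.
    move=> K'; rewrite /Ek; case: (posnP k) => [-> //| kp].
    by rewrite isC_pred // hC.
  have hK0 : clo G K := clo_mono (subsetUr _ _) hK.
  have IHK := IH K hK0; rewrite hEk addn0 -/G -/D in IHK.
  have -> : (e |: D) :\: (e |: G) = D :\: G.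
    apply/setP => f; rewrite !in_setD !in_setU1; case: (f =P e) => [-> | _] //=.
    by rewrite (negbTE heD) andbF.
  rewrite ins_U1_card //.
  case heK: (e \subset K) => /=; last by rewrite !addn0.
  case: existsP => [_ | hno]; first by move: IHK; rewrite -/G -/D /=; lia.
  rewrite /= addn0.
  set G' := e |: G.
  set L := compE G' e.
  have hL' : clo G' L by apply: compE_clo.
  have heL : e \subset L by apply: sub_compE.
  have hLK : L \subset K := compE_sub hK heK.
  have hL : clo G L := clo_mono (subsetUr _ _) hL'.
  have hKL : clo G (K :\: L) := clo_diff hK0 hL.
  have IHL := IH L hL; have IHKL := IH (K :\: L) hKL.
  rewrite hEk addn0 in IHL; rewrite hEk addn0 in IHKL.
  have hG'2 : forall f, f \in G' -> #|f| = 2.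
    move=> f hf; apply: h2; move: hf; rewrite !in_setU1 => /orP [-> // | hf].
    by rewrite (subsetP hGD _ hf) orbT.
  have hsplit := ins_split_le K hL' hG'2.
  rewrite /G' !ins_U1_card // heL in hsplit.
  have heKL : (e \subset K :\: L) = false.
    apply/negP => h; have := h2 e; rewrite setU11 => /(_ isT).
    case: (set_0Vmem e) => [-> | [z hz]]; first by rewrite cards0.
    move=> _; have := subsetP h z hz; rewrite inE (subsetP heL z hz) //.
  rewrite heKL addn0 in hsplit.
  have hbge : #|ins L (D :\: G)| + #|ins (K :\: L) (D :\: G)| <= #|ins K (D :\: G)|.
    apply: ins_split_ge hLK _ => f; rewrite inE => /andP [_]; exact: hD2.
  have hfull : #|ins L (e |: D)| = 'C(#|L|, 2).
    rewrite -cards_draws /ins; apply: eq_card => f.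
    rewrite [in LHS]in_set [in RHS]in_set.
    apply/idP/idP.
      by move=> /andP [hf hfL]; rewrite hfL (h2 f hf) eqxx.
    move=> /andP [hfL hf2]; rewrite hfL ?andbT.
    apply/negPn/negP => hn; apply: hno; exists f; rewrite hf2 hfL /=.
    exact: hn.
  rewrite ins_U1_card // heL (ins_D L hGD) in hfull.
  have hKcard : #|L| + #|K :\: L| = #|K|.
    by rewrite -(cardsID L K) (setIidPr hLK).
  have hpar := odd_bin2 #|L|.
  rewrite /= in hfull hsplit.
  have hLp := par_arith hpar hfull IHL.
  have hh := half_add #|L| #|K :\: L|; rewrite hKcard in hh.
  move: hsplit hbge hLp IHKL hh; rewrite /=; rewrite -/G -/D heK /=; lia.
- have IHK := IH K hK.
  rewrite hDG ins_U1_card; last by rewrite in_setD (negbTE heD) andbF.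
  have : Ek k K <= (e \subset K).
    case hE: (Ek k K) => //; move: hE; rewrite /Ek => /and4P [kp hC1 hsubK hex].
    have := hb k.-1; rewrite prednK // => /(_ hk hC1 (existsP hex)) hsK.
    by rewrite (subset_trans hsK (compE_sub hK hsubK)).
  move: IHK; rewrite -/G -/D; case: (Ek k K); case: (e \subset K) => /=; lia.
Qed.

End Game.
End Gr.

Theorem lemma2p4 (n : nat) (cstart : bool) (s : seq {set 'I_n}) :
  valid_play s -> blocker_rule cstart s ->
  forall x : 'I_n,
    let G := cgraph cstart s (size s) in
    let C := vcomp G x in
    'C(#|C|, 2) - #|C| ./2 <=
      2 * #|[set f : {set 'I_n} | [&& #|f| == 2, f \subset C & f \notin G]]|.
Proof.
move=> hv hb x; cbv zeta.
set G := cgraph cstart s (size s). set C := vcomp G x.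
have hC : clo G C by apply: vcomp_clo.
have hinv := inv_all hv hb (leqnn (size s)) hC.
have hGD : G \subset claimed s (size s) by apply: cg_sub_cl.
have hD := ins_D C hGD.
set D := claimed s (size s) in hinv hD hGD.
have hbin : #|ins C D| + Ek cstart s (size s) C <= 'C(#|C|, 2).
  rewrite -cards_draws.
  case hE: (Ek cstart s (size s) C); last first.
    rewrite addn0; apply: subset_leq_card; apply/subsetP => f.
    rewrite [in X in X -> _]in_set => /andP [hf hfC]; rewrite in_set hfC.
    by rewrite (cl_card hv hf) eqxx.
  rewrite addn1; apply: proper_card; apply/properP; split.
    apply/subsetP => f.
    rewrite [in X in X -> _]in_set => /andP [hf hfC]; rewrite in_set hfC.
    by rewrite (cl_card hv hf) eqxx.
  move: hE; rewrite /Ek => /and4P [_ _ hsub /existsP [f /and3P [hf2 hfL hfD]]].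
  exists f; first by rewrite in_set hf2 (subset_trans hfL (compE_sub hC hsub)).
  by rewrite in_set negb_and hfD.
have hT : #|[set f : {set 'I_n} | [&& #|f| == 2, f \subset C & f \notin G]]| =
          'C(#|C|, 2) - #|ins C G|.
  rewrite -cards_draws -(cardsID G [set A : {set 'I_n} | A \subset C & #|A| == 2]).
  have -> : [set A : {set 'I_n} | A \subset C & #|A| == 2] :&: G = ins C G.
    apply/setP => f; rewrite !in_set.
    case hf: (f \in G); rewrite ?andbF // andbT.
    have := cl_card hv (subsetP hGD _ hf); rewrite andbC => ->; by rewrite eqxx.
  rewrite addKn; apply: eq_card => f; rewrite !in_set.
  by case: (f \in G); case: (f \subset C); case: (#|f| == 2).
rewrite hT.
move: hinv hbin; rewrite hD; case: (Ek cstart s (size s) C) => /=; rewrite -/G -!divn2; lia.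
Qed.
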